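(* Let $S\in\{0,1\}^\infty$. 1. If $\mathrm{Dim}_{\mathrm{FS}}(S)=0$, then $S$ is finite-state shallow. 2. If $S$ is normal (equivalently, $\dim_{\mathrm{FS}}(S)=1$), then $S$ is finite-state shallow.
   Context: A finite-state transducer (FST) is a 4-tuple $T=(Q,\delta,\nu,q_0)$ with $Q$ a nonempty finite set of states, $\delta:Q\times\{0,1\}\to Q$, $\nu:Q\times\{0,1\}\to\{0,1\}^*$, $q_0\in Q$, every state reachable from $q_0$; $\widehat\delta(\lambda)=q_0$, $\widehat\delta(xa)=\delta(\widehat\delta(x),a)$, $T(\lambda)=\lambda$, $T(xa)=T(x)\nu(\widehat\delta(x),a)$. Fix a standard binary representation $\sigma_T$ of each FST, $|T|=|\sigma_T|$, $\mathrm{FST}^{\leq k}=\{T:|T|\le k\}$, and $\mathrm{FS}^k(x)=\min\{|p|:\exists T\in\mathrm{FST}^{\le k},\ T(p)=x\}$. For a sequence $S$, $S\upharpoonright n$ denotes its first $n$ bits. The finite-state dimension and strong dimension are $\dim_{\mathrm{FS}}(S)=\lim_{k\to\infty}\liminf_{n\to\infty}\mathrm{FS}^k(S\upharpoonright n)/n$ and $\mathrm{Dim}_{\mathrm{FS}}(S)=\lim_{k\to\infty}\limsup_{n\to\infty}\mathrm{FS}^k(S\upharpoonright n)/n$. $S$ is normal (in Borel's sense) if for every $k$, every string of length $k$ occurs in $S$ with limiting frequency $2^{-k}$; it is known that $S$ is normal iff $\dim_{\mathrm{FS}}(S)=1$. $S$ is finite-state deep if $(\exists\alpha>0)(\forall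 k\in\mathbb{N})(\exists k'\in\mathbb{N})(\exists^\infty n\in\mathbb{N})\ \mathrm{FS}^k(S\upharpoonright n)-\mathrm{FS}^{k'}(S\upharpoonright n)\ge\alpha n$; $S$ is finite-state shallow if it is not finite-state deep. *)

(* Defs.v *)
From HB Require Import structures.
From mathcomp Require Import all_boot all_order all_algebra.
From mathcomp Require Import all_classical all_reals.
From mathcomp Require Import ereal topology normedtype sequences.

Set Implicit Arguments.
Unset Strict Implicit.
Unset Printing Implicit Defensive.

Import Order.TTheory GRing.Theory Num.Theory.
Import numFieldNormedType.Exports.
Local Open Scope classical_set_scope.
Local Open Scope ring_scope.

(* States are 'I_(fst_n T).+1 (a nonempty finite set); bits are bool
   (false = 0, true = 1). *)
Record FST := MkFST {
  fst_n : nat;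
  fst_delta : 'I_fst_n.+1 -> bool -> 'I_fst_n.+1;
  fst_nu : 'I_fst_n.+1 -> bool -> seq bool;
  fst_q0 : 'I_fst_n.+1 }.

Definition delta_hat (T : FST) (x : seq bool) : 'I_(fst_n T).+1 :=
  foldl (fun q a => fst_delta q a) (fst_q0 T) x.

Definition reachable (T : FST) : Prop :=
  forall q : 'I_(fst_n T).+1, exists x : seq bool, delta_hat T x = q.

Fixpoint run_from (T : FST) (q : 'I_(fst_n T).+1) (x : seq bool) : seq bool :=
  match x with
  | [::] => [::]
  | a :: x' => fst_nu q a ++ run_from (fst_delta q a) x'
  end.

Definition fst_out (T : FST) (x : seq bool) : seq bool := run_from (fst_q0 T) x.

Definition code_nat (j : nat) : seq bool := rcons (nseq j true) false.
Definition code_str (w : seq bool) : seq bool :=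
  rcons (flatten [seq [:: true; b] | b <- w]) false.

Definition fst_code (T : FST) : seq bool :=
  code_nat (fst_n T) ++ code_nat (fst_q0 T) ++
  flatten [seq code_nat (fst_delta q a) ++ code_str (fst_nu q a)
          | q <- enum 'I_(fst_n T).+1, a <- [:: false; true]].

Definition fst_size (T : FST) : nat := size (fst_code T).

(* FS^k(x) = min { |p| : exists T, |T| <= k, T(p) = x }, as an extended
   real; it is +oo when no transducer of size <= k outputs x. *)
Definition FS {R : realType} (k : nat) (x : seq bool) : \bar R :=
  ereal_inf [set ((size p)%:R)%:E | p in
     [set p : seq bool | exists T : FST,
        [/\ reachable T, (fst_size T <= k)%N & fst_out T p = x]]].

Definition prefix (S : nat -> bool) (n : nat) : seq bool := mkseq S n.

Definition FS_ratio {R : realType} (S : nat -> bool) (k n : nat) : \bar R :=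
  (@FS R k (prefix S n) * ((n%:R : R)^-1)%:E)%E.

Definition dimFS {R : realType} (S : nat -> bool) : \bar R :=
  limn (fun k => limn_einf (fun n => @FS_ratio R S k n)).

Definition DimFS {R : realType} (S : nat -> bool) : \bar R :=
  limn (fun k => limn_esup (fun n => @FS_ratio R S k n)).

(* number of (possibly overlapping) occurrences of w in S|n *)
Definition occ (S : nat -> bool) (w : seq bool) (n : nat) : nat :=
  count (fun i => mkseq (fun j => S (i + j)%N) (size w) == w)
        (iota 0 (n.+1 - size w)).

Definition normal {R : realType} (S : nat -> bool) : Prop :=
  forall w : seq bool,
    (fun n : nat => ((occ S w n)%:R / n%:R : R)) @ \oo --> ((2%:R : R) ^- size w).

Definition fs_deep {R : realType} (S : nat -> bool) : Prop :=
  exists alpha : R, 0 < alpha /\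
    forall k : nat, exists k' : nat,
      forall N : nat, exists n : nat, (N <= n)%N /\
        (@FS R k (prefix S n) - @FS R k' (prefix S n) >= (alpha * n%:R)%:E)%E.

Definition fs_shallow {R : realType} (S : nat -> bool) : Prop := ~ @fs_deep R S.

(* Main.v *)
Require Import Defs.
From HB Require Import structures.
From mathcomp Require Import all_boot all_order all_algebra.
From mathcomp Require Import all_classical all_reals.
From mathcomp Require Import ereal topology normedtype sequences.
From mathcomp Require Import zify ring lra.
Import Order.TTheory GRing.Theory Num.Theory.
Import numFieldNormedType.Exports.
Set Implicit Arguments. Unset Strict Implicit. Unset Printing Implicit Defensive.

Section Run.
Variable T : FST.
Local Notation Q := 'I_(fst_n T).+1.

Definition dfold (q : Q) u := foldl (fun q a => fst_delta q a) q u.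

Lemma run_cat (q : Q) u v : run_from q (u ++ v) = run_from q u ++ run_from (dfold q u) v.
Proof. by elim: u q => //= a u IH q; rewrite IH catA. Qed.

Definition A (q : Q) p t := size (run_from q (take t p)).

Lemma A_mono q p t t' : (t <= t')%N -> (A q p t <= A q p t')%N.
Proof.
move=> tt; rewrite /A -(subnKC tt) takeD run_cat size_cat; exact: leq_addr.
Qed.

Lemma A_step q p t : (t < size p)%N ->
  A q p t.+1 = (A q p t + size (fst_nu (dfold q (take t p)) (nth false p t)))%N.
Proof.
move=> tp; rewrite /A (take_nth false tp) -cats1 run_cat size_cat /= cats0 //.
Qed.

Lemma A0 q p : A q p 0 = 0%N.
Proof. by rewrite /A take0. Qed.

Lemma A_size q p : A q p (size p) = size (run_from q p).
Proof. by rewrite /A take_size. Qed.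

Definition tau q p i := find (fun t => (i < A q p t.+1)%N) (iota 0 (size p)).

Lemma tau_spec q p i : (i < size (run_from q p))%N ->
  [/\ (tau q p i < size p)%N, (A q p (tau q p i) <= i)%N & (i < A q p (tau q p i).+1)%N].
Proof.
move=> ip.
have p0 : (0 < size p)%N.
  by case: p ip => //=.
have hh : has (fun t => (i < A q p t.+1)%N) (iota 0 (size p)).
  apply/hasP; exists (size p).-1; first by rewrite mem_iota /= add0n prednK ?leqnn.
  by rewrite prednK // A_size.
have tl : (tau q p i < size p)%N by move: hh; rewrite has_find size_iota.
split => //.
  case E: (tau q p i) => [|t]; first by rewrite A0.
  have := @before_find _ 0%N (fun t => (i < A q p t.+1)%N) (iota 0 (size p)) t.
  rewrite -/(tau q p i) E ltnSn nth_iota ?add0n; last by rewrite -E (leq_trans _ tl).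
  by move/(_ isT)/negbT; rewrite -leqNgt.
have := @nth_find _ 0%N (fun t => (i < A q p t.+1)%N) (iota 0 (size p)) hh.
by rewrite -/(tau q p i) nth_iota ?add0n.
Qed.

Lemma tau_mono q p i i' : (i <= i')%N -> (i' < size (run_from q p))%N ->
  (tau q p i <= tau q p i')%N.
Proof.
move=> ii i'p; have ip := leq_ltn_trans ii i'p.
have [_ h1 _] := tau_spec ip; have [_ _ h2] := tau_spec i'p.
rewrite leqNgt; apply/negP => lt.
have := A_mono q p lt; rewrite leqNgt => /negP; apply.
exact: leq_ltn_trans h1 (leq_ltn_trans ii h2).
Qed.

Variable c : nat.
Hypothesis Hc : forall (q : Q) a, (size (fst_nu q a) <= c)%N.

Lemma window q p i L : (i + L < size (run_from q p))%N ->
  exists (q' : Q) o w, [/\ (o < c)%N, size w = (tau q p (i + L) - tau q p i).+1 &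
    take L.+1 (drop i (run_from q p)) = take L.+1 (drop o (run_from q' w))].
Proof.
move=> iL.
have ip : (i < size (run_from q p))%N by apply: leq_ltn_trans iL; exact: leq_addr.
have [t1p h1 h1'] := tau_spec ip.
have [t2p h2 h2'] := tau_spec iL.
have t12 : (tau q p i <= tau q p (i + L))%N by apply: tau_mono => //; exact: leq_addr.
set t1 := tau q p i in t1p h1 h1' t12 *.
set t2 := tau q p (i + L) in t2p h2 h2' t12 *.
set w := take (t2.+1 - t1) (drop t1 p).
exists (dfold q (take t1 p)), (i - A q p t1)%N, w.
have pE : p = take t1 p ++ w ++ drop t2.+1 p.
  by rewrite /w -{2}(subnK (leqW t12)) -drop_drop !cat_take_drop.
have At2 : A q p t2.+1 = (A q p t1 + size (run_from (dfold q (take t1 p)) w))%N.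
  rewrite /A {1}pE catA take_size_cat ?run_cat ?size_cat //.
  rewrite size_takel ?(ltnW t1p) // /w size_takel ?size_drop; lia.
split.
- have := A_step q t1p; rewrite -/t1 => E.
  have := Hc (dfold q (take t1 p)) (nth false p t1); lia.
- rewrite /w size_takel ?size_drop; lia.
- rewrite {1}pE run_cat drop_cat -/(A q p t1).
  rewrite ltnNge h1 /= run_cat drop_cat.
  set X := run_from _ w in At2 *.
  have hX : (i - A q p t1 < size X)%N by lia.
  rewrite hX takel_cat // size_drop; lia.
Qed.
End Run.


Lemma sum_tele (f : nat -> nat) N L P :
  (forall i j, (i <= j)%N -> (j < N + L)%N -> (f i <= f j)%N) ->
  (forall j, (j < N + L)%N -> (f j <= P)%N) ->
  (\sum_(i < N) (f (i + L) - f i) <= L * P)%N.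
Proof.
move=> fm fP.
have key : forall N', (N' <= N)%N ->
  (\sum_(i < N') (f (i + L) - f i) + \sum_(i < L) f i = \sum_(i < L) f (N' + i))%N.
  elim => [|N' IH] hN; first by rewrite big_ord0.
  have r : (\sum_(i < N'.+1) (f (i + L) - f i) = \sum_(i < N') (f (i + L) - f i) + (f (N' + L) - f N'))%N.
    by rewrite big_ord_recr.
  rewrite r addnAC IH ?(ltnW hN) //.
  have e1 : (\sum_(i < L.+1) f (N' + i) = f N' + \sum_(i < L) f (N'.+1 + i))%N.
    rewrite big_ord_recl addn0; congr (_ + _); apply: eq_bigr => i _.
    by rewrite /bump /= addnS addSn.
  have e2 : (\sum_(i < L.+1) f (N' + i) = \sum_(i < L) f (N' + i) + f (N' + L))%N.
    by rewrite big_ord_recr.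

  have hm : (f N' <= f (N' + L))%N by apply: fm; lia.
  lia.
have := key N (leqnn N) => E.
have : (\sum_(i < L) f (N + i) <= \sum_(i < L) P)%N.
  by apply: leq_sum => i _; apply: fP; rewrite ltn_add2l.
rewrite sum_nat_const card_ord; lia.
Qed.

Lemma count_sum_le (g : nat -> nat) J N :
  (J.+1 * count (fun i => (J < g i)%N) (iota 0 N) <= \sum_(i < N) g i)%N.
Proof.
elim: N => [|N IH]; first by rewrite big_ord0 muln0.
have r : (\sum_(i < N.+1) g i = \sum_(i < N) g i + g N)%N by rewrite big_ord_recr.
rewrite r -[N.+1]addn1 iotaD count_cat /= add0n addn0 mulnDr.
set C := count _ (iota 0 N) in IH *; set Sg := (\sum_(i < N) g i)%N in IH *.
case: ltnP => h /=; nia.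
Qed.


Section Tab.
Variables K c : nat.
Definition tab := {ffun 'I_K * bool -> 'I_K * c.-bseq bool}.

Fixpoint run_tab (tb : tab) (q : 'I_K) (w : seq bool) : seq bool :=
  match w with
  | [::] => [::]
  | a :: w' => ((tb (q, a)).2 : seq bool) ++ run_tab tb (tb (q, a)).1 w'
  end.

Variable T : FST.
Hypothesis hn : ((fst_n T).+1 <= K)%N.
Hypothesis hc : forall (q : 'I_(fst_n T).+1) a, (size (fst_nu q a) <= c)%N.

Definition tabT : tab := [ffun qa : 'I_K * bool => if (qa.1 < (fst_n T).+1)%N then
  (widen_ord hn (fst_delta (inord qa.1 : 'I_(fst_n T).+1) qa.2), insub_bseq c (fst_nu (inord qa.1 : 'I_(fst_n T).+1) qa.2))
  else (qa.1, [bseq])].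

Lemma run_tabT (q : 'I_(fst_n T).+1) w : run_tab tabT (widen_ord hn q) w = run_from q w.
Proof.
elim: w q => //= a w IH q; rewrite ffunE /= ltn_ord inord_val /= IH; congr (_ ++ _).
by rewrite /insub_bseq insubdK //; exact: hc.
Qed.

Variable J L : nat.
Definition Dom := (tab * 'I_K * 'I_c * 'I_J.+1 * J.-tuple bool)%type.
Definition dwin (d : Dom) : seq bool :=
  take L (drop d.1.1.2 (run_tab d.1.1.1.1 d.1.1.1.2 (take d.1.2 d.2))).
Definition Dlist := [seq x <- undup [seq dwin d | d <- enum {: Dom}] | size x == L].

Lemma Dlist_uniq : uniq Dlist.
Proof. by apply: filter_uniq; exact: undup_uniq. Qed.

Lemma Dlist_size x : x \in Dlist -> size x = L.
Proof. by rewrite mem_filter => /andP [/eqP]. Qed.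

Lemma size_Dlist : (size Dlist <= #|tab| * K * c * J.+1 * 2 ^ J)%N.
Proof.
rewrite size_filter; apply: (leq_trans (count_size _ _)).
apply: (leq_trans (size_undup _)).
by rewrite size_map -cardE !card_prod !card_ord card_tuple card_bool.
Qed.

Lemma take_mktuple (w : seq bool) : (size w <= J)%N ->
  take (size w) [tuple nth false w i | i < J] = w.
Proof.
move=> wJ.
have st : size (take (size w) [tuple nth false w i | i < J]) = size w.
  by rewrite size_takel // size_tuple. apply: (@eq_from_nth _ false); first by rewrite st.
move=> i; rewrite st => iw.
rewrite nth_take // (nth_map (Ordinal (leq_trans iw wJ))); last by rewrite size_enum_ord; lia.
have e : (nth (Ordinal (leq_trans iw wJ)) (val (ord_tuple J)) i : nat) = i.
  by rewrite val_ord_tuple nth_enum_ord //; lia.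
by rewrite e.
Qed.

Lemma Dlist_mem (q : 'I_(fst_n T).+1) o w : (o < c)%N -> (size w <= J)%N ->
  size (take L (drop o (run_from q w))) = L ->
  take L (drop o (run_from q w)) \in Dlist.
Proof.
move=> oc wJ sz; rewrite mem_filter sz eqxx /= mem_undup.
have -> : take L (drop o (run_from q w)) =
  dwin ((((tabT, widen_ord hn q), Ordinal oc), Ordinal (wJ : (size w < J.+1)%N)),
        [tuple nth false w i | i < J]).
  by rewrite /dwin /= take_mktuple // run_tabT.
by apply: map_f; rewrite mem_enum.
Qed.
End Tab.


Lemma size_flatten_mem (s : seq (seq bool)) x : x \in s -> (size x <= size (flatten s))%N.
Proof.
elim: s => //= y s IH; rewrite in_cons size_cat => /orP [/eqP ->|/IH]; lia.
Qed.

Lemma size_code_str w : size (code_str w) = (2 * size w).+1.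
Proof. rewrite /code_str size_rcons; elim: w => //= a w ->; lia. Qed.

Lemma fst_n_lt T : (fst_n T < fst_size T)%N.
Proof. by rewrite /fst_size /fst_code size_cat /code_nat size_rcons size_nseq; lia. Qed.

Lemma fst_nu_lt T (q : 'I_(fst_n T).+1) a : (size (fst_nu q a) < fst_size T)%N.
Proof.
rewrite /fst_size /fst_code !size_cat.
set s := flatten _.
have : (size (code_nat (fst_delta q a) ++ code_str (fst_nu q a)) <= size s)%N.
  apply: size_flatten_mem.
  apply/allpairsP; exists (q, a) => /=; split => //; first by rewrite mem_enum.
  by case: a.
rewrite size_cat size_code_str; lia.
Qed.


Definition Tid : FST := @MkFST 0 (fun q _ => q) (fun _ a => [:: a]) ord0.

Lemma Tid_reach : reachable Tid.
Proof. by move=> q; exists [::]; rewrite /delta_hat /=; apply/val_inj; case: q => [[]]. Qed.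

Lemma Tid_size : fst_size Tid = 10%N.
Proof. by rewrite /fst_size /fst_code /= enum_ordSl enum_ord0. Qed.

Lemma Tid_out p : fst_out Tid p = p.
Proof. rewrite /fst_out /=; by elim: p => //= a p ->. Qed.



Lemma count_mem_sum (D : seq (seq bool)) (s : seq nat) (g : nat -> seq bool) :
  uniq D -> count (fun i => g i \in D) s = (\sum_(x <- D) count (fun i => g i == x) s)%N.
Proof.
elim: D => [|x D IH] /=; first by rewrite big_nil; elim: s.
case/andP => xD uD; rewrite big_cons -IH //.
clear IH; elim: s => //= i s IHs; rewrite in_cons IHs.
case: eqP => [->|_]; first by rewrite (negbTE xD) /=; lia.
by rewrite /=; lia.
Qed.

Lemma cover_count (s : seq nat) (a b : pred nat) :
  (forall i, i \in s -> a i || b i) -> (size s <= count a s + count b s)%N.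
Proof.
elim: s => //= i s IH h.
have := h i (mem_head _ _); have := IH (fun j js => h j (@mem_behead _ (i :: s) _ js)).
case: (a i); case: (b i) => //= ; lia.
Qed.

Lemma core (T : FST) k p L J :
  (fst_size T <= k)%N ->
  let y := fst_out T p in
  let N := (size y - L)%N in
  (J.+1 * (N - count (fun i => take L.+1 (drop i y) \in Dlist k.+1 k J L.+1) (iota 0 N))
    <= L * size p + N)%N.
Proof.
move=> hk /=; set y := fst_out T p; set N := (size y - L)%N.
have hn : ((fst_n T).+1 <= k.+1)%N by have := fst_n_lt T; lia.
have hc : forall (q : 'I_(fst_n T).+1) a, (size (fst_nu q a) <= k)%N.
  by move=> q a; have := fst_nu_lt q a; lia.
case: (posnP N) => [->|Npos]; first by rewrite sub0n muln0.
set q0 := fst_q0 T.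
pose f i := tau q0 p i.
pose cost i := (f (i + L) - f i).+1.
have yE : y = run_from q0 p by [].
have cov : forall i, i \in iota 0 N ->
    (take L.+1 (drop i y) \in Dlist k.+1 k J L.+1) || (J < cost i)%N.
  move=> i; rewrite mem_iota add0n => /andP [_ iN].
  have iL : (i + L < size (run_from q0 p))%N by rewrite -yE; lia.
  have [q' [o [w [oc sw eq]]]] := window hc iL.
  case: (leqP (cost i) J) => [cJ|]; last by rewrite orbT.
  apply/orP; left; rewrite yE eq.
  apply: (Dlist_mem hn hc) => //; first by rewrite sw.
  by rewrite -eq size_takel // size_drop; lia.
have h1 := cover_count cov; rewrite size_iota in h1.
have h2 := count_sum_le cost J N.
have h3 : (\sum_(i < N) cost i = \sum_(i < N) (f (i + L) - f i) + N)%N.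
  rewrite /cost; under eq_bigr do rewrite -addn1.
  by rewrite big_split /= sum_nat_const card_ord muln1.
have h4 : (\sum_(i < N) (f (i + L) - f i) <= L * size p)%N.
  apply: sum_tele.
    move=> i j ij jn; apply: tau_mono => //; rewrite -yE; lia.
  move=> j jn; have : (j < size (run_from q0 p))%N by rewrite -yE; lia.
  by case/tau_spec => /ltnW.
set C := count _ (iota 0 N) in h1 *.
set E := count _ (iota 0 N) in h1 h2.
set Sc := (\sum_(i < N) cost i)%N in h2 h3.
set St := (\sum_(i < N) _)%N in h3 h4.
have : (N - C <= E)%N by lia.
move=> h; have h5 := leq_mul (leqnn J.+1) h.
set M1 := (J.+1 * (N - C))%N in h5 *; set M2 := (J.+1 * E)%N in h5 h2; lia.
Qed.


Lemma exp_lin A : exists d, (0 < d)%N /\ (A * d <= 2 ^ d)%N.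
Proof.
exists (2 * A + 2)%N; split; first lia.
have h := ltn_expl A (isT : (1 < 2)%N).
have -> : (2 ^ (2 * A + 2) = 4 * (2 ^ A * 2 ^ A))%N by rewrite -expnD -[4%N]/(2 ^ 2)%N -expnD; congr (2 ^ _)%N; lia.
set X := (2 ^ A)%N in h *; nia.
Qed.

Local Open Scope ring_scope.

Lemma final_ineq (R : realFieldType) (n P L J d C N eps beta eta M : R) :
  (J + 1) * (N - C) <= L * P + N ->
  N = n - L -> C <= (beta + eta) * n ->
  J = L - d -> L = d * M -> 1 <= M -> 4 <= eps * M ->
  (J + 1) * beta * M <= L -> eta = eps / 8 -> 1 <= d ->
  0 <= n -> 4 * L <= eps * n -> 0 <= beta -> 0 < eps ->
  (1 - eps) * n <= P.
Proof.
move=> h1 hN hC hJ hL hM heM hb he hd hn hLn hbeta heps.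
have L1 : 1 <= L by rewrite hL; nra.
have J1L : J + 1 <= L by lra.
have J0 : 0 <= J + 1 by rewrite hJ hL; nra.
have s1 : L * P >= J * N - (J + 1) * C by nra.
have s2 : (J + 1) * C <= (J + 1) * beta * n + (J + 1) * eta * n by nra.
have s3 : (J + 1) * beta * n * M <= L * n by nra.
have s3' : (J + 1) * beta * n <= eps * L * n / 4.
  have X0 : 0 <= (J + 1) * beta * n by apply: mulr_ge0 => //; apply: mulr_ge0.
  have := ler_wpM2r X0 heM.
  have := ler_wpM2l (ltW heps) s3.
  have -> : eps * ((J + 1) * beta * n * M) = eps * M * ((J + 1) * beta * n) by ring.
  lra.
have s4 : (J + 1) * eta * n <= L * eps * n / 8 by rewrite he; nra.
have s5 : J * N >= L * n - d * n - L * L.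
  have e : J * N = L * n - d * n - L * L + d * L by rewrite hN hJ; ring.
  have dL : 0 <= d * L by nra.
  lra.
have s6 : d * n * 4 <= eps * L * n.
  have dn : 0 <= d * n by nra.
  have := ler_wpM2r dn heM.
  have -> : eps * L * n = eps * M * (d * n) by rewrite hL; ring.
  lra.
have s7 : 4 * L * L <= eps * L * n.
  have L0 : 0 <= L by lra.
  have := ler_wpM2r L0 hLn; lra.
have : L * ((1 - eps) * n) <= L * P by nra.
rewrite ler_pM2l //; lra.
Qed.

Lemma natrB_ge (R : numDomainType) (m n : nat) : (m%:R - n%:R : R) <= (m - n)%N%:R.
Proof.
case: (leqP n m) => h; first by rewrite natrB.
rewrite (_ : (m - n)%N = 0%N); last lia.
by rewrite subr_le0 ler_nat ltnW.
Qed.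

Lemma window_mkseq (S : nat -> bool) n i l : (i + l <= n)%N ->
  take l (drop i (mkseq S n)) = mkseq (fun j => S (i + j)) l.
Proof.
move=> h; have sz : size (take l (drop i (mkseq S n))) = l.
  by rewrite size_takel // size_drop size_mkseq; lia.
apply: (@eq_from_nth _ false); first by rewrite sz size_mkseq.
move=> j; rewrite sz => jl.
rewrite nth_take // nth_drop !nth_mkseq //; lia.
Qed.

Lemma occ_count S n x L : size x = L.+1 ->
  occ S x n = count (fun i => take L.+1 (drop i (mkseq S n)) == x) (iota 0 (n - L)).
Proof.
move=> sx; rewrite /occ sx subSS; apply: eq_in_count => i.
rewrite mem_iota add0n => /andP [_ hi].
by rewrite window_mkseq //; lia.
Qed.

Lemma sum_const_seq (R : realType) (D : seq (seq bool)) (a : R) :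
  \sum_(x <- D) a = (size D)%:R * a.
Proof. by elim: D => [|x D IH]; rewrite ?big_nil ?mul0r // big_cons IH /= mulrS mulrDl mul1r. Qed.

Lemma sum_cvg (R : realType) (D : seq (seq bool)) (u : seq bool -> nat -> R) (a : R) :
  (forall x, x \in D -> (u x n @[n --> \oo] --> a)%classic) ->
  ((\sum_(x <- D) u x n) @[n --> \oo] --> (size D)%:R * a)%classic.
Proof.
elim: D => [|x D IH] h.
  rewrite mul0r; under eq_cvg do rewrite big_nil; exact: cvg_cst.
under eq_cvg do rewrite big_cons.
rewrite /= mulrS mulrDl mul1r.
apply: cvgD; first exact: h (mem_head _ _).
by apply: IH => y yD; apply: h; rewrite in_cons yD orbT.
Qed.

Lemma KL (R : realType) (S : nat -> bool) (k : nat) (eps : R) : 0 < eps -> @normal R S ->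
  exists N0, forall n, (N0 <= n)%N -> forall T p, (fst_size T <= k)%N ->
    fst_out T p = Defs.prefix S n -> (1 - eps) * n%:R <= (size p)%:R.
Proof.
move=> heps hS.
set C0 := (#|{: tab k.+1 k}| * k.+1 * k)%N.
set M := (Num.trunc (4 / eps)).+1.
have heM : 4 <= eps * M%:R.
  have := truncnS_gt (4 / eps); rewrite -/M => h.
  have := ler_wpM2l (ltW heps) (ltW h).
  by rewrite mulrCA divff ?mulr1 // gt_eqF.
have [d [d0 hd]] := exp_lin (C0 * M * M).
set L := (d * M)%N.
set J := (L - d)%N.
set D := Dlist k.+1 k J L.+1.
set beta : R := (size D)%:R / 2 ^+ L.+1.
set eta : R := eps / 8.
have dL : (d <= L)%N by rewrite /L; rewrite leq_pmulr.
have Key : (J.+1 * size D * M <= L * 2 ^ L.+1)%N.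
  set X := (2 ^ J)%N; set Y := (2 ^ d)%N.
  have e2 : (2 ^ L.+1 = X * (2 * Y))%N.
    by rewrite /X /Y -expnS -expnD; congr (2 ^ _)%N; rewrite /J; lia.
  have sD : (size D <= C0 * L * X)%N.
    apply: (leq_trans (size_Dlist _ _ _ _)); rewrite /C0 /X.
    rewrite -!mulnA !leq_mul2l; apply/orP; right; apply/orP; right; apply/orP; right.
    by rewrite mulnA -/L leq_mul2r; apply/orP; right; rewrite /J; lia.
  have JL : (J.+1 <= L)%N by rewrite /J; lia.
  have s1 : (J.+1 * size D * M <= L * (C0 * L * X) * M)%N.
    by apply: leq_mul => //; apply: leq_mul.
  have e : (L * (C0 * L * X) * M = L * X * (C0 * M * M * d))%N.
    by rewrite /L; ring.
  rewrite e2; apply: (leq_trans s1); rewrite e -mulnA leq_mul2l; apply/orP; right.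
  rewrite leq_mul2l; apply/orP; right; apply: (leq_trans hd); rewrite -/Y; lia.
have hsum : ((\sum_(x <- D) ((occ S x n)%:R / n%:R : R)) @[n --> \oo] --> beta)%classic.
  have -> : beta = (size D)%:R * ((2%:R : R) ^- L.+1) by [].
  apply: sum_cvg => x xD; rewrite -(Dlist_size xD); exact: hS.
have eta0 : 0 < eta by rewrite /eta divr_gt0.
have hbe : beta < beta + eta by rewrite ltrDl.
have [N1 _ HN1] := @cvgr_le _ _ _ _ _ beta hsum (beta + eta) hbe.
exists (maxn N1 (L * M).+1) => n; rewrite geq_max => /andP [hn1 hn2] T p hk hy.
have hc := @core T k p L J hk.
rewrite /= hy size_mkseq in hc.
set C := count _ _ in hc.
have CE : C = (\sum_(x <- D) occ S x n)%N.
  rewrite /C count_mem_sum ?Dlist_uniq // [LHS]big_seq [RHS]big_seq.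
  by apply: eq_bigr => x xD; rewrite (occ_count _ _ (Dlist_size xD)).
have hs : (\sum_(x <- D) ((occ S x n)%:R / n%:R : R)) <= beta + eta by exact: HN1.
have n0 : (0 < n%:R :> R) by rewrite ltr0n; lia.
rewrite -mulr_suml -natr_sum -CE ler_pdivrMr // in hs.
have Ln : (L <= n)%N.
  have : (L <= L * M)%N by rewrite leq_pmulr.
  lia.
have hcR : ((J.+1 * (n - L - C))%N%:R <= (L * size p + (n - L))%N%:R :> R) by rewrite ler_nat.
rewrite natrM natrD natrM -natr1 in hcR.
have J0 : (0 : R) <= J%:R + 1 by rewrite natr1.
have h1 : (J%:R + 1) * ((n - L)%N%:R - C%:R) <= L%:R * (size p)%:R + (n - L)%N%:R :> R.
  apply: le_trans hcR; apply: ler_wpM2l => //; exact: natrB_ge.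
apply: (final_ineq h1 (natrB _ Ln) hs (natrB _ dL) (natrM _ _ _) _ heM _ (erefl eta)).
- by rewrite ler1n.
- have hK : ((J.+1 * size D * M)%N%:R <= (L * 2 ^ L.+1)%N%:R :> R) by rewrite ler_nat.
  rewrite !natrM natrX -natr1 in hK.
  have X0 : (0 : R) < 2 ^+ L.+1 by rewrite exprn_gt0.
  have -> : (J%:R + 1) * beta * M%:R = ((J%:R + 1) * (size D)%:R * M%:R) * (2 ^+ L.+1)^-1 :> R.
    by rewrite /beta; ring.
  by rewrite ler_pdivrMr // /L natrM.
- by rewrite ler1n.
- by [].
- have hLM : ((L * M)%N%:R <= n%:R :> R) by rewrite ler_nat ltnW.
  have := ler_wpM2l (ltW heps) hLM.
  have L0 : (0 : R) <= L%:R by [].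
  have := ler_wpM2r L0 heM.
  rewrite natrM; lra.
- by rewrite /beta divr_ge0.
- by [].
Qed.


Local Open Scope ring_scope.

Section P2.
Variable R : realType.
Local Open Scope ereal_scope.

Lemma FS_Tid_le k x : (10 <= k)%N -> @FS R k x <= (size x)%:R%:E.
Proof.
move=> hk; apply: ereal_inf_lbound; exists x => //; exists Tid; split.
- exact: Tid_reach.
- by rewrite Tid_size.
- exact: Tid_out.
Qed.

Lemma FS_lb k x (a : R) : (forall T p, (fst_size T <= k)%N -> fst_out T p = x -> (a <= (size p)%:R)%R) ->
  a%:E <= @FS R k x.
Proof. move=> h; apply: le_ereal_inf_tmp => _ [p [T [_ hk ho]] <-]; rewrite lee_fin; apply: (h T p hk ho). Qed.

Lemma FS_ge0' k x : 0 <= @FS R k x.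
Proof. by apply: le_ereal_inf_tmp => _ [p _ <-]; rewrite lee_fin. Qed.

Lemma part2 S : @normal R S -> @fs_shallow R S.
Proof.
move=> hS [alpha [a0 H]].
have [k' Hk'] := H 10%N.
have a2 : (0 < alpha / 2)%R by rewrite divr_gt0.
have [N0 HN0] := KL k' a2 hS.
have [n [hn Hn]] := Hk' N0.+1.
have lb := FS_lb (fun T p hk ho => HN0 n (ltnW hn) T p hk ho).
have ub := @FS_Tid_le 10 (Defs.prefix S n) (leqnn 10).
rewrite size_mkseq in ub.
have n0 : (0 < n%:R :> R)%R by rewrite ltr0n; lia.
have := FS_ge0' 10 (Defs.prefix S n).
move: Hn lb ub.
case: (FS 10 (Defs.prefix S n)) => [r| |]; case: (FS k' (Defs.prefix S n)) => [r'| |] //=.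
rewrite -EFinB !lee_fin => h1 h2 h3 _.
have : (alpha * n%:R <= alpha / 2 * n%:R)%R by lra.
have := ltr_pM2r n0; move=> e; rewrite ler_pM2r // => h.
have : (alpha <= alpha / 2)%R by [].
lra.
Qed.
End P2.


Local Open Scope ring_scope.

Section P1.
Variable R : realType.
Local Open Scope ereal_scope.

Lemma FS_ge0 k x : 0 <= @FS R k x.
Proof. by apply: le_ereal_inf_tmp => _ [p _ <-]; rewrite lee_fin. Qed.

Lemma FS_mono k k' x : (k <= k')%N -> @FS R k' x <= FS k x.
Proof.
move=> kk; apply: ereal_inf_le_tmp => _ [p [T [r s o]] <-]; exists p => //.
by exists T; split => //; exact: leq_trans kk.
Qed.

Lemma FS_ratio_mono S k k' n : (k <= k')%N -> @FS_ratio R S k' n <= FS_ratio S k n.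
Proof. by move=> kk; apply: lee_wpmul2r; [rewrite lee_fin invr_ge0 | exact: FS_mono]. Qed.

Lemma esups_le (u v : (\bar R)^nat) m : (forall n, u n <= v n) -> esups u m <= esups v m.
Proof.
move=> uv; apply: ub_ereal_sup => _ [n /= mn <-].
apply: le_trans (uv n) _; apply: ereal_sup_ubound; by exists n.
Qed.

Lemma part1 S : @DimFS R S = 0 -> @fs_shallow R S.
Proof.
move=> D [alpha [a0 H]].
pose u k := fun n => @FS_ratio R S k n.
have gE k : limn_esup (u k) = ereal_inf (range (esups (u k))).
  by rewrite limn_esup_lim; apply/cvg_lim => //; exact: cvg_esups_inf.
have gmono : nonincreasing_seq (fun k => limn_esup (u k)).
  move=> k k' kk; rewrite !gE; apply: le_ereal_inf_tmp => _ [m _ <-].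
  apply: (@le_trans _ _ (esups (u k') m)).
    by apply: ereal_inf_lbound; exists m.
  by apply: esups_le => n; exact: FS_ratio_mono.
have := ereal_nonincreasing_cvgn gmono => gc.
have : ereal_inf (range (fun k => limn_esup (u k))) < alpha%:E.
  have <- : limn (fun k => limn_esup (u k)) = ereal_inf (range (fun k => limn_esup (u k))) by exact: cvg_lim gc.
  by move: D; rewrite /DimFS => ->; rewrite lte_fin.
case/ereal_inf_lt => _ [k _ <-]; rewrite gE.
case/ereal_inf_lt => _ [m _ <-] Hm.
have Hn n : (m <= n)%N -> u k n < alpha%:E.
  move=> mn; apply: le_lt_trans Hm; apply: ereal_sup_ubound; by exists n.
have [k' Hk'] := H k.
have [n [mn Hn2]] := Hk' m.+1.
have := Hn n (ltnW mn); rewrite /u /FS_ratio.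
have n0 : (0 < n%:R :> R)%R by rewrite ltr0n (leq_ltn_trans _ mn).
have := FS_ge0 k' (Defs.prefix S n); have := FS_ge0 k (Defs.prefix S n).
move: Hn2.
case: (FS k (Defs.prefix S n)) => [r| |]; case: (FS k' (Defs.prefix S n)) => [r'| |] //=.
- rewrite -EFinM -EFinB !lee_fin !lte_fin => h1 h2 h3.
  rewrite ltr_pdivrMr // => h4.
  have : (alpha * n%:R <= r)%R by apply: le_trans h1 _; rewrite lerBlDr lerDl.
  by rewrite leNgt h4.
- by rewrite gt0_mulye // lte_fin invr_gt0.
Qed.
End P1.


Local Open Scope ring_scope.

Theorem proposition1 (R : realType) (S : nat -> bool) :
  (@DimFS R S = 0%:E -> @fs_shallow R S) /\
  (@normal R S -> @fs_shallow R S).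
Proof.
split; [exact: part1 | exact: part2].
Qed.
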